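(* Let $0.8<t<1$, $P=(0,t)$, $Q=(0,-t)$, and let $-1<r'<\frac{t-1}{t+1}$, $R'=(r',0)$. Then $\rho(\psi_{\triangle PQR'})<\frac{2}{5}$.
   Context: $D$ is the open unit disk in $\mathbb R^2$, $S^1$ its boundary circle identified with $\mathbb R/\mathbb Z$ via the counterclockwise normalized angle. For a closed convex $U\subset D$ and $v\in S^1$, $\psi_U(v)$ is the point $w\in S^1\setminus\{v\}$ such that the line $vw$ meets $U$ and $U$ lies in the closed half-plane to the left of the directed line from $v$ to $w$; it is an orientation-preserving homeomorphism of $S^1$; $\triangle PQR'$ denotes the closed filled triangle. For such $f$, $\rho(f)=\lim_{n\to\infty}(\overline f^n(x)-x)/n$ with $\overline f$ the lift to $\mathbb R$ satisfying $\overline f(0)\in[0,1)$. *)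

(* Defs.v *)
From Stdlib Require Import Reals Lra.
Open Scope R_scope.

(* Point of the unit circle with counterclockwise normalized angle x
   (S^1 = R/Z). *)
Definition circ (x : R) : (R * R)%type := (cos (2 * PI * x), sin (2 * PI * x)).

Definition cross (a b : (R * R)%type) : R := fst a * snd b - snd a * fst b.
Definition vsub (a b : (R * R)%type) : (R * R)%type := (fst a - fst b, snd a - snd b).

Definition left_of (v w z : (R * R)%type) : Prop := 0 <= cross (vsub w v) (vsub z v).
Definition on_line (v w z : (R * R)%type) : Prop := cross (vsub w v) (vsub z v) = 0.

Definition is_psi (U : (R * R)%type -> Prop) (v w : (R * R)%type) : Prop :=
  w <> v /\ (exists z, U z /\ on_line v w z) /\ (forall z, U z -> left_of v w z).

Definition is_psi_lift (U : (R * R)%type -> Prop) (F : R -> R) : Prop :=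
  (forall x, continuity_pt F x) /\ 0 <= F 0 < 1 /\
  (forall x, is_psi U (circ x) (circ (F x))).

Definition filled_triangle (A B C : (R * R)%type) (z : (R * R)%type) : Prop :=
  exists a b c, 0 <= a /\ 0 <= b /\ 0 <= c /\ a + b + c = 1 /\
    z = (a * fst A + b * fst B + c * fst C, a * snd A + b * snd B + c * snd C).

(* Main.v *)
Require Import Defs.
From Stdlib Require Import Reals Lra Psatz ZArith Lia.
From Coquelicot Require Import Coquelicot.
Open Scope R_scope.

Definition e (x:R) : (R*R)%type := (cos (PI*x), sin (PI*x)).
Definition B (X u w : (R*R)%type) : R :=
  (1 - fst X) * fst u * fst w + (1 + fst X) * snd u * snd w
  - snd X * (snd u * fst w + fst u * snd w).
Definition crs (u w : (R*R)%type) : R := fst u * snd w - snd u * fst w.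
Definition sq (u : (R*R)%type) : (R*R)%type :=
  (fst u * fst u - snd u * snd u, 2 * fst u * snd u).

Lemma circ_sq x : circ x = sq (e x).
Proof.
  unfold circ, sq, e; simpl.
  replace (2 * PI * x) with (2 * (PI * x)) by ring.
  rewrite cos_2a, sin_2a. f_equal; ring.
Qed.

Lemma e_norm x : fst (e x) * fst (e x) + snd (e x) * snd (e x) = 1.
Proof. unfold e; simpl. pose proof (sin2_cos2 (PI*x)). unfold Rsqr in H. lra. Qed.

Lemma cross_id (u q X : (R*R)%type) :
  cross (vsub (sq q) (sq u)) (vsub X (sq u)) =
  2 * crs u q * B X u q
  + (1 - (fst u * fst u + snd u * snd u)) * cross (sq q) X
  - (1 - (fst q * fst q + snd q * snd q)) * cross (sq u) X.
Proof.
  destruct u as [a b]; destruct q as [c d]; destruct X as [p r].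
  unfold cross, vsub, sq, crs, B; simpl. ring.
Qed.

Definition Pv (t:R) : (R*R)%type := (0, t).
Definition Qv (t:R) : (R*R)%type := (0, -t).
Definition Rv (r:R) : (R*R)%type := (r, 0).
Definition perp (u:(R*R)%type) : (R*R)%type := (- snd u, fst u).
Definition kX (X:(R*R)%type) (x:R) : R := - B X (e x) (perp (e x)) / B X (e x) (e x).
Definition K (t r x : R) : R := Rmax (kX (Pv t) x) (Rmax (kX (Qv t) x) (kX (Rv r) x)).
Definition G (t r x : R) : R := x + /2 - atan (K t r x) / PI.
Definition adm (t r x y : R) : Prop :=
  0 <= B (Pv t) (e x) (e y) /\ 0 <= B (Qv t) (e x) (e y) /\ 0 <= B (Rv r) (e x) (e y).

Lemma PI_neq0' : PI <> 0. Proof. pose proof PI_RGT_0; lra. Qed.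

Lemma e_G t r x : let k := K t r x in
  e (G t r x) = ((k * fst (e x) - snd (e x)) / sqrt (1 + k²),
                 (fst (e x) + k * snd (e x)) / sqrt (1 + k²)).
Proof.
  intro k. unfold e, G; simpl. fold k.
  replace (PI * (x + / 2 - atan k / PI)) with ((PI * x + PI/2) - atan k)
    by (field; apply PI_neq0').
  rewrite cos_minus, sin_minus, cos_plus, sin_plus, cos_PI2, sin_PI2, cos_atan, sin_atan.
  f_equal; field; apply Rgt_not_eq, sqrt_lt_R0; pose proof (Rle_0_sqr k); lra.
Qed.

Lemma B_lin X u a b : B X u (a * fst u + b * fst (perp u), a * snd u + b * snd (perp u))
   = a * B X u u + b * B X u (perp u).
Proof. destruct u; destruct X; unfold B, perp; simpl; ring. Qed.

Lemma Buu_P t x : 0 < t < 1 -> 0 < B (Pv t) (e x) (e x).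
Proof.
  intros Ht. pose proof (e_norm x). destruct (e x) as [c s]; simpl in *.
  unfold B, Pv; simpl. assert (0 <= t*((c-s)*(c-s))) by (apply Rmult_le_pos; [lra|apply Rle_0_sqr]).
  assert (t*(c*c+s*s) = t) by (rewrite H; ring). lra.
Qed.
Lemma Buu_Q t x : 0 < t < 1 -> 0 < B (Qv t) (e x) (e x).
Proof.
  intros Ht. pose proof (e_norm x). destruct (e x) as [c s]; simpl in *.
  unfold B, Qv; simpl. assert (0 <= t*((c+s)*(c+s))) by (apply Rmult_le_pos; [lra|apply Rle_0_sqr]).
  assert (t*(c*c+s*s) = t) by (rewrite H; ring). lra.
Qed.
Lemma Buu_R r x : -1 < r < 1 -> 0 < B (Rv r) (e x) (e x).
Proof.
  intros Hr. pose proof (e_norm x). destruct (e x) as [c s]; simpl in *.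
  unfold B, Rv; simpl. assert (r*(c*c+s*s) = r) by (rewrite H; ring).
  destruct (Rle_lt_dec 0 r).
  - assert (0 <= r*(s*s)) by (apply Rmult_le_pos; [lra|apply Rle_0_sqr]). lra.
  - assert (0 <= (-r)*(c*c)) by (apply Rmult_le_pos; [lra|apply Rle_0_sqr]). lra.
Qed.

Lemma B_G X t r x : 0 < B X (e x) (e x) ->
  B X (e x) (e (G t r x)) = B X (e x) (e x) * (K t r x - kX X x) / sqrt (1 + (K t r x)²).
Proof.
  intros Hp. rewrite e_G. set (k := K t r x). unfold kX.
  set (u := e x) in *. destruct u as [c s] eqn:Eu.
  assert (Hs: 0 < sqrt (1 + k²)) by (apply sqrt_lt_R0; pose proof (Rle_0_sqr k); lra).
  replace ((k * fst (c, s) - snd (c, s)) / sqrt (1 + k²), (fst (c, s) + k * snd (c, s)) / sqrt (1 + k²))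
   with ((k / sqrt (1 + k²)) * fst (c,s) + (1 / sqrt (1+k²)) * fst (perp (c,s)),
         (k / sqrt (1 + k²)) * snd (c,s) + (1 / sqrt (1+k²)) * snd (perp (c,s))).
  2:{ unfold perp; simpl; f_equal; field; lra. }
  rewrite B_lin. field. split; lra.
Qed.

Lemma B_sym X u w : B X u w = B X w u.
Proof. unfold B; ring. Qed.

Lemma B_lin2 X u v w a b :
  B X u (a * fst v + b * fst w, a * snd v + b * snd w) = a * B X u v + b * B X u w.
Proof. unfold B; simpl; ring. Qed.

Lemma e_comb a g b :
  (sin (PI*b - PI*a) * fst (e g), sin (PI*b - PI*a) * snd (e g)) =
  (sin (PI*b - PI*g) * fst (e a) + sin (PI*g - PI*a) * fst (e b),
   sin (PI*b - PI*g) * snd (e a) + sin (PI*g - PI*a) * snd (e b)).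
Proof. unfold e; simpl. rewrite !sin_minus. f_equal; ring. Qed.

Lemma B_scal X u w a : B X u (a * fst w, a * snd w) = a * B X u w.
Proof. unfold B; simpl; ring. Qed.

Lemma sin_pos_int d : 0 < d < 1 -> 0 < sin (PI * d).
Proof. intros. apply sin_gt_0; pose proof PI_RGT_0; nra. Qed.

Lemma B_between X u a g b : a <= g <= b -> b - a < 1 ->
  0 <= B X u (e a) -> 0 <= B X u (e b) -> 0 <= B X u (e g).
Proof.
  intros Hg Hab Ha Hb.
  destruct (Req_dec a b) as [Eab|Nab].
  { subst. replace g with b by lra. auto. }
  assert (Hs : 0 < sin (PI*b - PI*a)).
  { replace (PI*b - PI*a) with (PI*(b-a)) by ring. apply sin_pos_int; lra. }
  assert (H1 : 0 <= sin (PI*b - PI*g)).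
  { destruct (Req_dec g b). subst. replace (PI*b-PI*b) with 0 by ring. rewrite sin_0; lra.
    replace (PI*b - PI*g) with (PI*(b-g)) by ring. left; apply sin_pos_int; lra. }
  assert (H2 : 0 <= sin (PI*g - PI*a)).
  { destruct (Req_dec g a). subst. replace (PI*a-PI*a) with 0 by ring. rewrite sin_0; lra.
    replace (PI*g - PI*a) with (PI*(g-a)) by ring. left; apply sin_pos_int; lra. }
  assert (E : sin (PI*b - PI*a) * B X u (e g) =
     sin (PI*b - PI*g) * B X u (e a) + sin (PI*g - PI*a) * B X u (e b)).
  { rewrite <- B_scal, e_comb, B_lin2. reflexivity. }
  assert (0 <= sin (PI*b - PI*a) * B X u (e g)).
  { rewrite E. apply Rplus_le_le_0_compat; apply Rmult_le_pos; auto. }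
  apply (Rmult_le_reg_l (sin (PI*b - PI*a))); auto. lra.
Qed.

Lemma B_between_strict X u a g b : a <= g < b -> b - a < 1 ->
  0 < B X u (e a) -> 0 <= B X u (e b) -> 0 < B X u (e g).
Proof.
  intros Hg Hab Ha Hb.
  assert (Hs : 0 < sin (PI*b - PI*a)).
  { replace (PI*b - PI*a) with (PI*(b-a)) by ring. apply sin_pos_int; lra. }
  assert (H1 : 0 < sin (PI*b - PI*g)).
  { replace (PI*b - PI*g) with (PI*(b-g)) by ring. apply sin_pos_int; lra. }
  assert (H2 : 0 <= sin (PI*g - PI*a)).
  { destruct (Req_dec g a). subst. replace (PI*a-PI*a) with 0 by ring. rewrite sin_0; lra.
    replace (PI*g - PI*a) with (PI*(g-a)) by ring. left; apply sin_pos_int; lra. }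
  assert (E : sin (PI*b - PI*a) * B X u (e g) =
     sin (PI*b - PI*g) * B X u (e a) + sin (PI*g - PI*a) * B X u (e b)).
  { rewrite <- B_scal, e_comb, B_lin2. reflexivity. }
  assert (0 < sin (PI*b - PI*a) * B X u (e g)).
  { rewrite E. apply Rplus_lt_le_0_compat. apply Rmult_lt_0_compat; auto. apply Rmult_le_pos; auto. }
  apply (Rmult_lt_reg_l (sin (PI*b - PI*a))); auto. lra.
Qed.

Definition prm (t r : R) : Prop := 0 < t < 1 /\ -1 < r < 1.

Lemma atan_div_bound k : -/2 < atan k / PI < /2.
Proof.
  pose proof (atan_bound k). pose proof PI_RGT_0.
  split.
  - apply (Rmult_lt_reg_r PI); auto. unfold Rdiv. rewrite Rmult_assoc, Rinv_l by lra. lra.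
  - apply (Rmult_lt_reg_r PI); auto. unfold Rdiv. rewrite Rmult_assoc, Rinv_l by lra. lra.
Qed.

Lemma G_range t r x : 0 < G t r x - x < 1.
Proof. unfold G. pose proof (atan_div_bound (K t r x)). lra. Qed.

Lemma sqrt1k_pos k : 0 < sqrt (1 + k²).
Proof. apply sqrt_lt_R0; pose proof (Rle_0_sqr k); lra. Qed.

Lemma B_G_nonneg X t r x : 0 < B X (e x) (e x) -> kX X x <= K t r x ->
  0 <= B X (e x) (e (G t r x)).
Proof.
  intros H1 H2. rewrite B_G by auto. unfold Rdiv.
  apply Rmult_le_pos. apply Rmult_le_pos; lra.
  left; apply Rinv_0_lt_compat, sqrt1k_pos.
Qed.

Lemma kP_le t r x : kX (Pv t) x <= K t r x.
Proof. unfold K. apply Rmax_l. Qed.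
Lemma kQ_le t r x : kX (Qv t) x <= K t r x.
Proof. unfold K. eapply Rle_trans; [|apply Rmax_r]. apply Rmax_l. Qed.
Lemma kR_le t r x : kX (Rv r) x <= K t r x.
Proof. unfold K. eapply Rle_trans; [|apply Rmax_r]. apply Rmax_r. Qed.

Lemma G_adm t r x : prm t r -> adm t r x (G t r x).
Proof.
  intros [Ht Hr]. split; [|split]; apply B_G_nonneg.
  apply Buu_P; auto. apply kP_le. apply Buu_Q; auto. apply kQ_le. apply Buu_R; auto. apply kR_le.
Qed.

Lemma G_tight t r x : prm t r ->
  B (Pv t) (e x) (e (G t r x)) = 0 \/ B (Qv t) (e x) (e (G t r x)) = 0 \/
  B (Rv r) (e x) (e (G t r x)) = 0.
Proof.
  intros [Ht Hr].
  assert (Hm : K t r x = kX (Pv t) x \/ K t r x = kX (Qv t) x \/ K t r x = kX (Rv r) x).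
  { unfold K. destruct (Rmax_Rle (kX (Qv t) x) (kX (Rv r) x) (Rmax (kX (Qv t) x) (kX (Rv r) x))) as [_ _].
    apply Rmax_case_strong; intros; auto. right.
    apply Rmax_case_strong; intros; auto. }
  destruct Hm as [E|[E|E]]; [left|right;left|right;right].
  - rewrite B_G by (apply Buu_P; auto). rewrite E. unfold Rminus. rewrite Rplus_opp_r. unfold Rdiv. ring.
  - rewrite B_G by (apply Buu_Q; auto). rewrite E. unfold Rminus. rewrite Rplus_opp_r. unfold Rdiv. ring.
  - rewrite B_G by (apply Buu_R; auto). rewrite E. unfold Rminus. rewrite Rplus_opp_r. unfold Rdiv. ring.
Qed.

Lemma G_max t r x y : prm t r -> x < y < x + 1 -> adm t r x y -> y <= G t r x.
Proof.
  intros Hp Hy Ha. destruct (Rle_lt_dec y (G t r x)) as [|Hlt]; auto. exfalso.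
  pose proof (G_range t r x). pose proof Hp as [Ht Hr]. destruct Ha as [H1 [H2 H3]].
  destruct (G_tight t r x Hp) as [E|[E|E]].
  - assert (0 < B (Pv t) (e x) (e (G t r x))).
    { apply B_between_strict with x y; try lra. apply Buu_P; auto. } lra.
  - assert (0 < B (Qv t) (e x) (e (G t r x))).
    { apply B_between_strict with x y; try lra. apply Buu_Q; auto. } lra.
  - assert (0 < B (Rv r) (e x) (e (G t r x))).
    { apply B_between_strict with x y; try lra. apply Buu_R; auto. } lra.
Qed.

Lemma adm_left t r x y w : prm t r -> x <= y <= w -> w - x < 1 -> adm t r x w -> adm t r y w.
Proof.
  intros [Ht Hr] Hy Hw [H1 [H2 H3]].
  split; [|split]; rewrite B_sym; apply B_between with x w; try lra;
   rewrite ?(B_sym _ (e w) (e x)); auto; left.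
  apply Buu_P; auto. apply Buu_Q; auto. apply Buu_R; auto.
Qed.

Lemma adm_right t r x y w : prm t r -> x <= y <= w -> w - x < 1 -> adm t r x w -> adm t r x y.
Proof.
  intros [Ht Hr] Hy Hw [H1 [H2 H3]].
  split; [|split]; apply B_between with x w; try lra; auto; left.
  apply Buu_P; auto. apply Buu_Q; auto. apply Buu_R; auto.
Qed.

Lemma G_mono t r x y : prm t r -> x <= y <= x + 1 -> G t r x <= G t r y.
Proof.
  intros Hp Hy. pose proof (G_range t r x). pose proof (G_range t r y).
  destruct (Rle_lt_dec (G t r x) y). lra.
  apply G_max; auto. lra.
  apply adm_left with x; auto; try lra. apply G_adm; auto.
Qed.

Lemma e_shift1 x : e (x + 1) = (- fst (e x), - snd (e x)).
Proof. unfold e; simpl. rewrite Rmult_plus_distr_l, Rmult_1_r, neg_cos, neg_sin. auto. Qed.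

Lemma kX_per X x : kX X (x + 1) = kX X x.
Proof.
  unfold kX. rewrite e_shift1. destruct (e x) as [c s]. unfold B, perp; simpl.
  f_equal; [f_equal|]; ring.
Qed.

Lemma G_per t r x : G t r (x + 1) = G t r x + 1.
Proof. unfold G, K. rewrite !kX_per. ring. Qed.

Lemma kX_cont X x : 0 < B X (e x) (e x) -> continuity_pt (kX X) x.
Proof.
  intros H. apply continuity_pt_filterlim. apply (ex_derive_continuous (kX X)).
  unfold kX, B, e, perp in *; simpl in *. auto_derive. lra.
Qed.

Lemma Rmax_cont f g x : continuity_pt f x -> continuity_pt g x ->
  continuity_pt (fun y => Rmax (f y) (g y)) x.
Proof.
  intros Hf Hg.
  apply continuity_pt_ext with (f := ((f + g + comp Rabs (f - g)) * fct_cte (/2))%F).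
  { intro y. unfold plus_fct, mult_fct, minus_fct, comp, fct_cte.
    unfold Rmax. destruct (Rle_dec (f y) (g y)).
    rewrite Rabs_left1 by lra. field. rewrite Rabs_right by lra. field. }
  apply continuity_pt_mult; [|apply continuity_pt_const; intros u v; auto].
  apply continuity_pt_plus. apply continuity_pt_plus; auto.
  apply continuity_pt_comp. apply continuity_pt_minus; auto. apply Rcontinuity_abs.
Qed.

Lemma G_cont t r : prm t r -> forall x, continuity_pt (G t r) x.
Proof.
  intros [Ht Hr] x.
  assert (HK : continuity_pt (K t r) x).
  { unfold K. apply Rmax_cont. apply kX_cont, Buu_P; auto.
    apply Rmax_cont. apply kX_cont, Buu_Q; auto. apply kX_cont, Buu_R; auto. }
  apply continuity_pt_ext with (f := (id + fct_cte (/2) - (comp atan (K t r)) * fct_cte (/PI))%F).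
  { intro y. unfold G, plus_fct, mult_fct, minus_fct, comp, fct_cte, id. unfold Rdiv. ring. }
  apply continuity_pt_minus. apply continuity_pt_plus. apply derivable_continuous_pt, derivable_pt_id.
  apply continuity_pt_const; intros u v; auto.
  apply continuity_pt_mult; [|apply continuity_pt_const; intros u v; auto].
  apply continuity_pt_comp; auto. apply derivable_continuous_pt, derivable_pt_atan.
Qed.

Lemma cross_e x y X : cross (vsub (circ y) (circ x)) (vsub X (circ x)) =
  2 * crs (e x) (e y) * B X (e x) (e y).
Proof.
  rewrite !circ_sq, cross_id. pose proof (e_norm x). pose proof (e_norm y).
  rewrite H, H0. ring.
Qed.

Lemma crs_sq_id (u w : (R*R)%type) :
  2 * (crs u w * crs u w) = (fst u * fst u + snd u * snd u) * (fst w * fst w + snd w * snd w)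
    - (fst (sq u) * fst (sq w) + snd (sq u) * snd (sq w)).
Proof. destruct u, w; unfold crs, sq; simpl; ring. Qed.

Lemma sq_norm (u : (R*R)%type) :
  fst (sq u) * fst (sq u) + snd (sq u) * snd (sq u) =
  (fst u * fst u + snd u * snd u) * (fst u * fst u + snd u * snd u).
Proof. destruct u; unfold sq; simpl; ring. Qed.

Lemma circ_eq_crs x y : circ x = circ y -> crs (e x) (e y) = 0.
Proof.
  intros H. rewrite !circ_sq in H. pose proof (crs_sq_id (e x) (e y)).
  rewrite <- H, sq_norm, !e_norm in H0.
  assert (crs (e x) (e y) * crs (e x) (e y) = 0) by lra.
  apply Rmult_integral in H1. tauto.
Qed.

Lemma crs_G t r x : 0 < crs (e x) (e (G t r x)).
Proof.
  rewrite e_G. pose proof (e_norm x). destruct (e x) as [c s]. unfold crs; simpl in *.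
  set (k := K t r x). pose proof (sqrt1k_pos k).
  replace (c * ((c + k * s) / sqrt (1 + k²)) - s * ((k * c - s) / sqrt (1 + k²)))
    with ((c*c+s*s) / sqrt (1 + k²)) by (field; lra).
  rewrite H. apply Rdiv_lt_0_compat; lra.
Qed.

Definition Ut (t r : R) := filled_triangle (pair 0 t) (pair 0 (- t)) (pair r 0).

Lemma U_vertex_P t r : Ut t r (Pv t).
Proof. exists 1, 0, 0. repeat split; try lra. unfold Pv; simpl; f_equal; ring. Qed.
Lemma U_vertex_Q t r : Ut t r (Qv t).
Proof. exists 0, 1, 0. repeat split; try lra. unfold Qv; simpl; f_equal; ring. Qed.
Lemma U_vertex_R t r : Ut t r (Rv r).
Proof. exists 0, 0, 1. repeat split; try lra. unfold Rv; simpl; f_equal; ring. Qed.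

Lemma cross_U t r v w z : Ut t r z ->
  exists a b c, 0 <= a /\ 0 <= b /\ 0 <= c /\
  cross (vsub w v) (vsub z v) = a * cross (vsub w v) (vsub (Pv t) v)
     + b * cross (vsub w v) (vsub (Qv t) v) + c * cross (vsub w v) (vsub (Rv r) v).
Proof.
  intros [a [b [c [Ha [Hb [Hc [Hs Hz]]]]]]]. exists a, b, c. repeat split; auto.
  subst z. destruct v, w. unfold cross, vsub, Pv, Qv, Rv; simpl.
  replace c with (1 - a - b) by lra. ring.
Qed.

Lemma G_psi t r x : prm t r -> is_psi (Ut t r) (circ x) (circ (G t r x)).
Proof.
  intros Hp. pose proof (crs_G t r x) as Hc. pose proof (G_adm t r x Hp) as [H1 [H2 H3]].
  split; [|split].
  - intro E. symmetry in E. apply circ_eq_crs in E. lra.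
  - destruct (G_tight t r x Hp) as [E|[E|E]].
    + exists (Pv t). split. apply U_vertex_P. unfold on_line. rewrite cross_e, E. ring.
    + exists (Qv t). split. apply U_vertex_Q. unfold on_line. rewrite cross_e, E. ring.
    + exists (Rv r). split. apply U_vertex_R. unfold on_line. rewrite cross_e, E. ring.
  - intros z Hz. unfold left_of. destruct (cross_U t r (circ x) (circ (G t r x)) z Hz)
      as [a [b [c [Ha [Hb [Hc' E]]]]]].
    rewrite E, !cross_e.
    assert (0 <= 2 * crs (e x) (e (G t r x))) by lra.
    repeat apply Rplus_le_le_0_compat; apply Rmult_le_pos; auto; apply Rmult_le_pos; auto.
Qed.

Lemma G_lift t r : prm t r -> is_psi_lift (Ut t r) (G t r).
Proof.
  intros Hp. split; [|split].
  - apply G_cont; auto.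
  - pose proof (G_range t r 0). lra.
  - intro x. apply G_psi; auto.
Qed.

Lemma circ_plus1 y : circ (y + 1) = circ y.
Proof. rewrite !circ_sq, e_shift1. destruct (e y). unfold sq; simpl; f_equal; ring. Qed.

Lemma circ_plus_nat y m : circ (y + INR m) = circ y.
Proof.
  induction m. simpl. rewrite Rplus_0_r; auto.
  rewrite S_INR, <- Rplus_assoc, circ_plus1. auto.
Qed.

Lemma circ_plusZ y n : circ (y + IZR n) = circ y.
Proof.
  destruct n.
  - simpl. rewrite Rplus_0_r; auto.
  - rewrite <- positive_nat_Z, <- INR_IZR_INZ. apply circ_plus_nat.
  - rewrite <- Pos2Z.opp_pos, opp_IZR, <- positive_nat_Z, <- INR_IZR_INZ.
    set (m := Pos.to_nat p). rewrite <- (circ_plus_nat (y + - INR m) m).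
    f_equal; ring.
Qed.

Lemma crs_e_sin a b : crs (e a) (e b) = sin (PI*b - PI*a).
Proof. unfold crs, e; simpl. rewrite sin_minus. ring. Qed.

Lemma cross_U' t r v w z : Ut t r z ->
  exists a b c, 0 <= a /\ 0 <= b /\ 0 <= c /\ a + b + c = 1 /\
  cross (vsub w v) (vsub z v) = a * cross (vsub w v) (vsub (Pv t) v)
     + b * cross (vsub w v) (vsub (Qv t) v) + c * cross (vsub w v) (vsub (Rv r) v).
Proof.
  intros [a [b [c [Ha [Hb [Hc [Hs Hz]]]]]]]. exists a, b, c. repeat split; auto.
  subst z. destruct v, w. unfold cross, vsub, Pv, Qv, Rv; simpl.
  replace c with (1 - a - b) by lra. ring.
Qed.

Lemma psi_unique t r x y : prm t r -> x < y < x + 1 ->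
  is_psi (Ut t r) (circ x) (circ y) -> y = G t r x.
Proof.
  intros Hp Hy [Hne [[z [Hz Hon]] Hleft]].
  pose proof Hp as [Ht Hr].
  assert (Hc : 0 < crs (e x) (e y)).
  { rewrite crs_e_sin. replace (PI*y - PI*x) with (PI*(y-x)) by ring. apply sin_pos_int; lra. }
  assert (HB : forall X, Ut t r X -> 0 <= B X (e x) (e y)).
  { intros X HX. pose proof (Hleft X HX). unfold left_of in H. rewrite cross_e in H.
    apply (Rmult_le_reg_l (2 * crs (e x) (e y))). lra. lra. }
  assert (Ha : adm t r x y).
  { split; [|split]; apply HB. apply U_vertex_P. apply U_vertex_Q. apply U_vertex_R. }
  pose proof (G_max t r x y Hp Hy Ha) as Hle.
  destruct (Req_dec y (G t r x)) as [|Hneq]; auto. exfalso.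
  pose proof (G_range t r x). pose proof (G_adm t r x Hp) as [G1 [G2 G3]].
  assert (SP : 0 < B (Pv t) (e x) (e y)).
  { apply B_between_strict with x (G t r x); try lra. apply Buu_P; auto. }
  assert (SQ : 0 < B (Qv t) (e x) (e y)).
  { apply B_between_strict with x (G t r x); try lra. apply Buu_Q; auto. }
  assert (SR : 0 < B (Rv r) (e x) (e y)).
  { apply B_between_strict with x (G t r x); try lra. apply Buu_R; auto. }
  unfold on_line in Hon.
  destruct (cross_U' t r (circ x) (circ y) z Hz) as [a [b [c [Ha0 [Hb0 [Hc0 [Hs E]]]]]]].
  rewrite E, !cross_e in Hon.
  assert (0 < a * (2 * crs (e x) (e y) * B (Pv t) (e x) (e y))
            + b * (2 * crs (e x) (e y) * B (Qv t) (e x) (e y))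
            + c * (2 * crs (e x) (e y) * B (Rv r) (e x) (e y))).
  { assert (0 < 2 * crs (e x) (e y) * B (Pv t) (e x) (e y)) by (apply Rmult_lt_0_compat; lra).
    assert (0 < 2 * crs (e x) (e y) * B (Qv t) (e x) (e y)) by (apply Rmult_lt_0_compat; lra).
    assert (0 < 2 * crs (e x) (e y) * B (Rv r) (e x) (e y)) by (apply Rmult_lt_0_compat; lra).
    destruct (Rle_lt_dec a 0); destruct (Rle_lt_dec b 0).
    - assert (c = 1) by lra. subst. nra.
    - nra.
    - nra.
    - nra. }
  lra.
Qed.


Lemma circ_int a b : circ a = circ b -> exists n : Z, b - a = IZR n.
Proof.
  intros H. apply circ_eq_crs in H. rewrite crs_e_sin in H.
  apply sin_eq_0_0 in H. destruct H as [k Hk]. exists k.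
  pose proof PI_RGT_0.
  apply (Rmult_eq_reg_l PI). lra. lra.
Qed.

Lemma lift_circ_eq t r F x : prm t r -> is_psi (Ut t r) (circ x) (circ (F x)) ->
  circ (F x) = circ (G t r x).
Proof.
  intros Hp Hpsi.
  destruct (archimed (F x - x)) as [A1 A2].
  set (n := (up (F x - x) - 1)%Z).
  assert (Hn : IZR n = IZR (up (F x - x)) - 1) by (unfold n; rewrite minus_IZR; auto).
  set (y := F x + - IZR n).
  assert (Ey : circ y = circ (F x)) by (unfold y; rewrite <- opp_IZR; apply circ_plusZ).
  destruct (Req_dec y x) as [E1|N1].
  { exfalso. destruct Hpsi as [Hne _]. apply Hne. rewrite <- Ey, E1. auto. }
  rewrite <- Ey in Hpsi |- *. f_equal. apply psi_unique; auto. unfold y in *. lra.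
Qed.

Lemma IZR_not_half m : IZR m <> /2 /\ IZR m <> -/2.
Proof.
  split; intro H.
  - assert (IZR (2*m) = IZR 1) by (rewrite mult_IZR; simpl; lra). apply eq_IZR in H0. lia.
  - assert (IZR (2*m) = IZR (-1)) by (rewrite mult_IZR; simpl; lra). apply eq_IZR in H0. lia.
Qed.

Lemma int_const h : continuity h -> (forall x, exists n:Z, h x = IZR n) -> h 0 = 0 ->
  forall x, h x = 0.
Proof.
  intros Hc Hi H0 x. destruct (Hi x) as [n Hn].
  destruct (Z.eq_dec n 0) as [->|Nz]. auto. exfalso.
  assert (Hbig : 1 <= IZR n \/ IZR n <= -1).
  { destruct (Z_lt_le_dec 0 n). left. apply IZR_le. lia. right. apply IZR_le. lia. }
  assert (Hx : x <> 0) by (intro; subst; rewrite H0 in Hn; apply Nz, eq_IZR; auto).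
  assert (Hnh : forall z, h z <> /2 /\ h z <> -/2).
  { intro z. destruct (Hi z) as [m Hm]. rewrite Hm. apply IZR_not_half. }
  destruct Hbig as [Hb|Hb]; destruct (Rlt_le_dec 0 x) as [Hx0|Hx0].
  - destruct (IVT (fun y => h y - /2) 0 x) as [z [_ Hz]].
    + apply continuity_minus; auto. apply continuity_const; intros u v; auto.
    + auto. + lra. + lra.
    + apply (proj1 (Hnh z)). lra.
  - destruct (IVT (fun y => /2 - h y) x 0) as [z [_ Hz]].
    + apply continuity_minus; auto. apply continuity_const; intros u v; auto.
    + lra. + lra. + lra.
    + apply (proj1 (Hnh z)). lra.
  - destruct (IVT (fun y => - /2 - h y) 0 x) as [z [_ Hz]].
    + apply continuity_minus; auto. apply continuity_const; intros u v; auto.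
    + auto. + lra. + lra.
    + apply (proj2 (Hnh z)). lra.
  - destruct (IVT (fun y => h y + /2) x 0) as [z [_ Hz]].
    + apply continuity_plus; auto. apply continuity_const; intros u v; auto.
    + lra. + lra. + lra.
    + apply (proj2 (Hnh z)). lra.
Qed.

Lemma F_eq_G t r F : prm t r -> is_psi_lift (Ut t r) F -> forall x, F x = G t r x.
Proof.
  intros Hp [Fc [F0 Fpsi]] x.
  assert (Hint : forall y, exists n:Z, (fun z => F z - G t r z) y = IZR n).
  { intro y. simpl. apply circ_int. symmetry. apply lift_circ_eq; auto. }
  assert (H0 : F 0 - G t r 0 = 0).
  { destruct (Hint 0) as [n Hn]. simpl in Hn. pose proof (G_range t r 0).
    assert (-1 < IZR n < 1) by lra. destruct H0 as [H1 H2].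
    apply lt_IZR in H1. apply lt_IZR in H2. assert (n = 0%Z) by lia. subst. simpl in Hn. lra. }
  pose proof (int_const (fun z => F z - G t r z)) as Hc.
  assert (continuity (fun z => F z - G t r z)).
  { apply continuity_minus. exact Fc. intro y; apply G_cont; auto. }
  specialize (Hc H Hint H0 x). simpl in Hc. lra.
Qed.

Definition It (g : R -> R) (n : nat) (x : R) := Nat.iter n g x.

Lemma It_S g n x : It g (S n) x = g (It g n x).
Proof. reflexivity. Qed.

Lemma It_add g m n x : It g (m + n) x = It g m (It g n x).
Proof. unfold It. apply Nat.iter_add. Qed.

Lemma Rabs_le_between x a : Rabs x <= a -> -a <= x <= a.
Proof. unfold Rabs. destruct (Rcase_abs x); lra. Qed.

Lemma It_per g (Hper : forall x, g (x + 1) = g x + 1) n x : It g n (x + 1) = It g n x + 1.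
Proof. induction n. reflexivity. rewrite !It_S, IHn, Hper. auto. Qed.

Lemma It_per_nat g (Hper : forall x, g (x + 1) = g x + 1) n x m :
  It g n (x + INR m) = It g n x + INR m.
Proof.
  induction m. simpl. rewrite !Rplus_0_r; auto.
  rewrite S_INR, <- Rplus_assoc, It_per, IHm by auto. ring.
Qed.

Lemma It_perZ g (Hper : forall x, g (x + 1) = g x + 1) n x k :
  It g n (x + IZR k) = It g n x + IZR k.
Proof.
  destruct k.
  - simpl. rewrite !Rplus_0_r; auto.
  - rewrite <- positive_nat_Z, <- INR_IZR_INZ. apply It_per_nat; auto.
  - rewrite <- Pos2Z.opp_pos, opp_IZR, <- positive_nat_Z, <- INR_IZR_INZ.
    set (m := Pos.to_nat p).
    pose proof (It_per_nat g Hper n (x + - INR m) m).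
    replace (x + - INR m + INR m) with x in H by ring. lra.
Qed.

Lemma It_mono g (Hper : forall x, g (x + 1) = g x + 1)
  (Hmono : forall x y, x <= y <= x + 1 -> g x <= g y) n x y :
  x <= y <= x + 1 -> It g n x <= It g n y <= It g n x + 1.
Proof.
  intros Hxy. induction n. simpl. lra.
  rewrite !It_S. split. apply Hmono. lra.
  rewrite <- Hper. apply Hmono. lra.
Qed.

Lemma shift_window x y : exists k : Z, x <= y + IZR k <= x + 1.
Proof.
  destruct (archimed (x - y)) as [A1 A2]. exists (up (x - y)). lra.
Qed.

Definition Dsp g n x := It g n x - x.

Lemma Dsp_perZ g (Hper : forall x, g (x + 1) = g x + 1) n x k :
  Dsp g n (x + IZR k) = Dsp g n x.
Proof. unfold Dsp. rewrite It_perZ by auto. ring. Qed.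

Lemma Dsp_close g (Hper : forall x, g (x + 1) = g x + 1)
  (Hmono : forall x y, x <= y <= x + 1 -> g x <= g y) n x y :
  Rabs (Dsp g n x - Dsp g n y) <= 1.
Proof.
  destruct (shift_window x y) as [k Hk].
  rewrite <- (Dsp_perZ g Hper n y k).
  pose proof (It_mono g Hper Hmono n x (y + IZR k) Hk).
  unfold Dsp. apply Rabs_le. lra.
Qed.

Lemma Dsp_add g m n x : Dsp g (m + n) x = Dsp g m (It g n x) + Dsp g n x.
Proof. unfold Dsp. rewrite It_add. ring. Qed.

Lemma Dsp_sub g (Hper : forall x, g (x + 1) = g x + 1)
  (Hmono : forall x y, x <= y <= x + 1 -> g x <= g y) m n x :
  Rabs (Dsp g (m + n) x - Dsp g m x - Dsp g n x) <= 1.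
Proof.
  rewrite Dsp_add. replace (Dsp g m (It g n x) + Dsp g n x - Dsp g m x - Dsp g n x)
    with (Dsp g m (It g n x) - Dsp g m x) by ring.
  apply Dsp_close; auto.
Qed.

Lemma Dsp_mult g (Hper : forall x, g (x + 1) = g x + 1)
  (Hmono : forall x y, x <= y <= x + 1 -> g x <= g y) k n x :
  Rabs (Dsp g (k * n) x - INR k * Dsp g n x) <= INR k.
Proof.
  induction k.
  - simpl. unfold Dsp. simpl. rewrite Rmult_0_l. replace (x - x - 0) with 0 by ring.
    rewrite Rabs_R0; lra.
  - replace (S k * n)%nat with (n + k * n)%nat by lia.
    pose proof (Dsp_sub g Hper Hmono n (k*n) x).
    rewrite S_INR. apply Rabs_le. apply Rabs_le_between in H. apply Rabs_le_between in IHk.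
    lra.
Qed.

Lemma Dsp_cross g (Hper : forall x, g (x + 1) = g x + 1)
  (Hmono : forall x y, x <= y <= x + 1 -> g x <= g y) m n x :
  Rabs (INR m * Dsp g n x - INR n * Dsp g m x) <= INR m + INR n.
Proof.
  pose proof (Dsp_mult g Hper Hmono m n x). pose proof (Dsp_mult g Hper Hmono n m x).
  rewrite Nat.mul_comm in H0.
  apply Rabs_le_between in H. apply Rabs_le_between in H0. apply Rabs_le. lra.
Qed.

Definition useq g x n := (Nat.iter n g x - x) / INR n.

Lemma useq_close g (Hper : forall x, g (x + 1) = g x + 1)
  (Hmono : forall x y, x <= y <= x + 1 -> g x <= g y) x m n :
  (0 < m)%nat -> (0 < n)%nat -> Rabs (useq g x n - useq g x m) <= / INR n + / INR m.
Proof.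
  intros Hm Hn. unfold useq.
  assert (0 < INR m) by (apply lt_0_INR; lia). assert (0 < INR n) by (apply lt_0_INR; lia).
  pose proof (Dsp_cross g Hper Hmono m n x). unfold Dsp, It in H1.
  replace ((Nat.iter n g x - x) / INR n - (Nat.iter m g x - x) / INR m) with
    ((INR m * (Nat.iter n g x - x) - INR n * (Nat.iter m g x - x)) / (INR n * INR m))
    by (field; lra).
  apply Rabs_le_between in H1. apply Rabs_le.
  assert (Hp : 0 < / (INR n * INR m)) by (apply Rinv_0_lt_compat; nra).
  replace (/ INR n + / INR m) with ((INR m + INR n) * / (INR n * INR m)) by (field; lra).
  unfold Rdiv. split.
  - replace (- ((INR m + INR n) * / (INR n * INR m))) with (- (INR m + INR n) * / (INR n * INR m)) by ring.
    apply Rmult_le_compat_r; lra.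
  - apply Rmult_le_compat_r; lra.
Qed.

Lemma useq_cauchy g (Hper : forall x, g (x + 1) = g x + 1)
  (Hmono : forall x y, x <= y <= x + 1 -> g x <= g y) x : Cauchy_crit (useq g x).
Proof.
  intros eps Heps. destruct (archimed_cor1 (eps/2)) as [N [HN1 HN2]]. lra.
  exists N. intros n m Hn Hm. unfold Rdist.
  eapply Rle_lt_trans. apply useq_close; auto; lia.
  assert (0 < INR N) by (apply lt_0_INR; lia).
  assert (INR N <= INR n) by (apply le_INR; lia). assert (INR N <= INR m) by (apply le_INR; lia).
  assert (/ INR n <= / INR N) by (apply Rinv_le_contravar; lra).
  assert (/ INR m <= / INR N) by (apply Rinv_le_contravar; lra). lra.
Qed.

Lemma It_cont g (Hc : forall x, continuity_pt g x) n : forall x, continuity_pt (It g n) x.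
Proof.
  induction n; intro x.
  - apply continuity_pt_ext with (f := id). intro; reflexivity.
    apply derivable_continuous_pt, derivable_pt_id.
  - apply continuity_pt_ext with (f := comp g (It g n)). intro; reflexivity.
    apply continuity_pt_comp; auto.
Qed.

Lemma rot_bound g (Hper : forall x, g (x + 1) = g x + 1)
  (Hmono : forall x y, x <= y <= x + 1 -> g x <= g y)
  (Hc : forall x, continuity_pt g x)
  (Hcore : forall y, It g 5 y < y + 2) x :
  exists rho, Un_cv (useq g x) rho /\ rho < 2/5.
Proof.
  destruct (Rcomplete.R_complete (useq g x) (useq_cauchy g Hper Hmono x)) as [rho Hrho].
  exists rho. split; auto.
  destruct (continuity_ab_maj (Dsp g 5) 0 1) as [M [HM HM01]]. lra.
  { intros c _. unfold Dsp. apply continuity_pt_minus. apply It_cont; auto.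
    apply derivable_continuous_pt, derivable_pt_id. }
  set (eps := 2 - Dsp g 5 M).
  assert (Heps : 0 < eps) by (unfold eps, Dsp; pose proof (Hcore M); lra).
  assert (Hall : forall y, Dsp g 5 y <= 2 - eps).
  { intro y. destruct (shift_window 0 y) as [k Hk].
    rewrite <- (Dsp_perZ g Hper 5 y k). unfold eps. assert (0 <= y + IZR k <= 1) by lra. pose proof (HM _ H). lra. }
  assert (Hk : forall k, Dsp g (5 * k) x <= INR k * (2 - eps)).
  { induction k. simpl. unfold Dsp; simpl. lra.
    replace (5 * S k)%nat with (5 + 5 * k)%nat by lia. rewrite Dsp_add, S_INR.
    pose proof (Hall (It g (5*k) x)). lra. }
  destruct (Hrho (eps/10)) as [N HN]. lra.
  specialize (HN (5 * S N)%nat ltac:(lia)). unfold Rdist in HN.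
  apply Rabs_def2 in HN. destruct HN as [HN1 HN2].
  pose proof (Hk (S N)). unfold useq in HN1, HN2. unfold Dsp, It in H.
  assert (0 < INR (S N)) by (apply lt_0_INR; lia).
  rewrite mult_INR in HN1, HN2. simpl (INR 5) in HN1, HN2.
  assert (Hle : (Nat.iter (5 * S N) g x - x) / ((1+1+1+1+1) * INR (S N)) <= (2 - eps) / 5).
  { apply (Rmult_le_reg_r ((1+1+1+1+1) * INR (S N))). nra.
    unfold Rdiv. rewrite Rmult_assoc, Rinv_l by nra.
    replace ((2 - eps) * / 5 * ((1+1+1+1+1) * INR (S N))) with (INR (S N) * (2 - eps)) by (field).
    lra. }
  lra.
Qed.

Lemma coreA_alg t r C0 S0 C1 S1 C2 S2 C3 S3 Ca Sa :
  0 < t < 1 -> -1 < r < 1 -> 1 + r < t * (1 - r) ->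
  0 < C0 -> 0 <= S0 -> 0 < C1 -> 0 <= S1 -> 0 < C2 -> 0 <= S2 -> 0 < C3 -> 0 <= S3 ->
  0 <= Ca -> 0 <= Sa -> Ca*Ca + Sa*Sa = 1 ->
  (1+t) * Sa * S0 <= (1-t) * Ca * C0 ->
  (1+t) * C0 * S1 <= (1-t) * S0 * C1 ->
  (1+t) * C1 * S2 <= (1-t) * S1 * C2 ->
  0 <= (1-r)*(Ca + Sa)*(C0 - S0) + (1+r)*(Ca - Sa)*(C0 + S0) ->
  (1-r)*(C2 - S2)*(C3 + S3) <= (1+r)*(C2 + S2)*(C3 - S3) ->
  False.
Proof.
  intros Ht Hr Hl HC0 HS0 HC1 HS1 HC2 HS2 HC3 HS3 HCa HSa Hna s0 s1 s2 Ra R3.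
  assert (Z0 : (1-t) * S0 < (1+t) * C0).
  { destruct (Rle_lt_dec S0 C0).
    - nra.
    - assert (HCa' : 0 < Ca).
      { destruct (Rle_lt_dec Ca 0); [|lra]. assert (Ca = 0) by lra. subst.
        assert (Sa * S0 <= 0) by nra. assert (Sa = 0) by nra. subst. lra. }
      assert (Sa < Ca).
      { assert (h1 : (1-t) * Ca * C0 < (1-t) * Ca * S0).
        { apply Rmult_lt_compat_l. nra. lra. }
        assert (h2 : (1-t) * Sa * S0 <= (1+t) * Sa * S0).
        { apply Rmult_le_compat_r. lra. apply Rmult_le_compat_r; lra. }
        assert (h3 : ((1-t) * S0) * Sa < ((1-t) * S0) * Ca) by lra.
        apply Rmult_lt_reg_l in h3. lra. nra. }
      assert (Hx : (1-r)*(Ca + Sa)*(S0 - C0) <= (1+r)*(Ca + Sa)*(C0 + S0)).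
      { assert ((1+r)*(Ca - Sa)*(C0 + S0) <= (1+r)*(Ca + Sa)*(C0 + S0)).
        { apply Rmult_le_compat_r. lra. apply Rmult_le_compat_l; lra. }
        lra. }
      assert (Hy : (1-r)*(S0 - C0) <= (1+r)*(C0 + S0)).
      { apply (Rmult_le_reg_l (Ca + Sa)). lra. nra. }
      nra. }
  assert (Z1 : S1 < C1).
  { assert (h1 : (1-t) * S0 * C1 < (1+t) * C0 * C1) by (apply Rmult_lt_compat_r; lra).
    assert (h2 : ((1+t) * C0) * S1 < ((1+t) * C0) * C1) by lra.
    apply Rmult_lt_reg_l in h2; nra. }
  assert (Z2 : (1+t) * S2 < (1-t) * C2).
  { assert (h1 : (1-t) * C2 * S1 < (1-t) * C2 * C1) by (apply Rmult_lt_compat_l; nra).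
    assert (h2 : C1 * ((1+t) * S2) < C1 * ((1-t) * C2)) by lra.
    apply Rmult_lt_reg_l in h2; nra. }
  destruct (Rle_lt_dec S3 C3).
  - assert (Hx : (1-r)*(C2 - S2)*(C3 + S3) <= (1+r)*(C2 + S2)*(C3 + S3)).
    { assert ((1+r)*(C2 + S2)*(C3 - S3) <= (1+r)*(C2 + S2)*(C3 + S3)).
      { apply Rmult_le_compat_l. nra. lra. } lra. }
    assert (Hy : (1-r)*(C2 - S2) <= (1+r)*(C2 + S2)).
    { apply (Rmult_le_reg_r (C3 + S3)). lra. nra. }
    nra.
  - assert ((1+r)*(C2 + S2)*(C3 - S3) < 0).
    { assert (0 < (1+r)*(C2+S2)) by nra. nra. }
    assert (C2 < S2).
    { destruct (Rle_lt_dec S2 C2); auto.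
      assert (0 <= (1-r)*((C2 - S2)*(C3+S3))) by (apply Rmult_le_pos; [lra|apply Rmult_le_pos; lra]).
      lra. }
    assert ((1-t) * C2 < (1-t) * S2) by (apply Rmult_lt_compat_l; lra).
    assert (t * S2 >= 0) by nra. lra.
Qed.

Lemma tk_ident k u v : (1-k)*(1+u)*(1-v) - (1+k)*(1-u)*(1+v) = 2*(u - v) - 2*k*(1 - u*v).
Proof. ring. Qed.
Lemma tk_ident2 k a b : (1-k)*(1+a)*(1+b) - (1+k)*(1-a)*(1-b) = 2*(a + b) - 2*k*(1 + a*b).
Proof. ring. Qed.

Lemma lt_t_step k l X Y : 0 < k < 1 -> 0 < l < (1-k)/(1+k) -> 0 < X -> Y <= l * X ->
  (1+k) * Y < (1-k) * X.
Proof.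
  intros Hk Hl HX HY.
  assert (l * X < (1-k)/(1+k) * X) by (apply Rmult_lt_compat_r; lra).
  assert ((1+k) * ((1-k)/(1+k) * X) = (1-k)*X) by (field; lra).
  assert ((1+k) * Y <= (1+k) * (l * X)) by (apply Rmult_le_compat_l; lra).
  assert ((1+k) * (l * X) < (1+k) * ((1-k)/(1+k) * X)) by (apply Rmult_lt_compat_l; lra).
  lra.
Qed.

Lemma coreB_T k l T0 T1 T2 T3 A :
  0 < k <= /9 -> 0 < l < (1-k)/(1+k) ->
  0 <= T0 -> 0 <= T1 -> 0 <= T2 -> 0 <= T3 -> 0 <= A ->
  A * T0 <= k -> T1 <= k * T0 -> T2 <= k * T1 -> T3 <= k * T2 ->
  (1 - T1)*(1 + T2) <= l * ((1 + T1)*(1 - T2)) ->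
  l * ((1 - T0)*(1 + T1)) <= (1 + T0)*(1 - T1) ->
  (1 - T3)*(1 - A) <= l * ((1 + T3)*(1 + A)) ->
  False.
Proof.
  intros Hk Hl H0 H1 H2 H3 HA s0 s1 s2 s3 R2 R1 R4.
  assert (HR4 : T3 + A > k * (1 + T3 * A)).
  { assert (0 < (1 + T3)*(1 + A)) by nra.
    pose proof (lt_t_step k l _ _ ltac:(lra) Hl H R4).
    pose proof (tk_ident2 k T3 A). nra. }
  destruct (Rle_lt_dec T1 1) as [Hu|Hu].
  - set (u := T1) in *. set (v := T2) in *.
    assert (Hv : v <= k) by nra.
    assert (HR2 : u - v > k * (1 - u*v)).
    { assert (0 < (1 + u)*(1 - v)) by nra.
      pose proof (lt_t_step k l _ _ ltac:(lra) Hl H R2).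
      pose proof (tk_ident k u v). nra. }
    assert (Hu1 : u * (1 + k*v) > k + v) by nra.
    assert (Hupos : k < u).
    { assert (k * (1 + k*v) <= k + v) by nra.
      assert (0 < 1 + k*v) by nra.
      destruct (Rle_lt_dec u k); auto.
      assert (u * (1 + k*v) <= k * (1 + k*v)) by (apply Rmult_le_compat_r; lra). lra. }
    assert (HAu : A * u <= k * k).
    { assert (A * u <= A * (k * T0)) by (apply Rmult_le_compat_l; lra).
      assert (A * (k*T0) = k * (A * T0)) by ring.
      assert (k * (A * T0) <= k * k) by (apply Rmult_le_compat_l; lra). lra. }
    assert (HAk : A < k).
    { destruct (Rle_lt_dec k A); auto. assert (k * u <= A * u) by (apply Rmult_le_compat_r; lra).
      assert (k * k < k * u) by (apply Rmult_lt_compat_l; lra). lra. }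
    assert (Hkey : (k + v) * (1 - v) >= k * (1 - k*k*v) * (1 + k*v)).
    { assert (E : (k + v) * (1 - v) - k * (1 - k*k*v) * (1 + k*v)
               = v * (1 - k - v - k*k + k*k*k + k*k*k*k*v)) by ring.
      assert (0 <= v * (1 - k - v - k*k + k*k*k + k*k*k*k*v)).
      { apply Rmult_le_pos; auto.
        assert (k*k <= /9 * /9) by (apply Rmult_le_compat; lra).
        assert (0 <= k*k*k) by (repeat apply Rmult_le_pos; lra).
        assert (0 <= k*k*k*k*v) by (repeat apply Rmult_le_pos; lra). lra. } lra. }
    assert (Hkey2 : u * (1 - v) > k * (1 - k*k*v)).
    { assert (0 < 1 + k*v) by nra. assert (0 < 1 - v) by lra.
      assert (u * (1 + k*v) * (1 - v) > (k + v) * (1 - v)) by (apply Rmult_gt_compat_r; lra).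
      assert (Hm : (u * (1 - v)) * (1 + k*v) > (k * (1 - k*k*v)) * (1 + k*v)) by lra.
      apply Rmult_gt_reg_r in Hm; auto. }
    assert (HkA : k * A <= k * k) by (apply Rmult_le_compat_l; lra).
    assert (k*k <= /9 * /9) by (apply Rmult_le_compat; lra).
    assert (F1 : T3 * (1 - k*A) <= k*v * (1 - k*A)) by (apply Rmult_le_compat_r; lra).
    assert (F2 : A * (1 - k*k*v) * u <= k*k * (1 - k*k*v)).
    { assert (k*k*v <= k*k*k) by (apply Rmult_le_compat_l; [apply Rmult_le_pos|]; lra).
      assert (k*k*k <= /9*/9*/9) by (apply Rmult_le_compat; try apply Rmult_le_pos; lra).
      assert (0 <= 1 - k*k*v) by lra.
      replace (A * (1 - k*k*v) * u) with ((A * u) * (1 - k*k*v)) by ring.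
      apply Rmult_le_compat_r; lra. }
    assert (F3 : (k*v + A*(1 - k*k*v) - k) * u <= k * (u*v + k*(1 - k*k*v) - u)) by lra.
    assert (F4 : u*v + k*(1 - k*k*v) - u < 0) by lra.
    assert (F5 : k*v + A*(1 - k*k*v) - k < 0).
    { assert (0 < k * (u - u*v - k*(1-k*k*v))) by (apply Rmult_lt_0_compat; lra).
      assert ((k*v + A*(1 - k*k*v) - k) * u < 0) by lra.
      destruct (Rle_lt_dec 0 (k*v + A*(1 - k*k*v) - k)); auto.
      assert (0 <= (k*v + A*(1 - k*k*v) - k) * u) by (apply Rmult_le_pos; lra). lra. }
    lra.
  - set (x := T0) in *. set (y := T1) in *.
    assert (Hx : y <= k * x) by lra.
    assert (Hx9 : 9 <= x).
    { assert (1 < k * x) by lra.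
      assert (k * x <= /9 * x) by (apply Rmult_le_compat_r; lra). lra. }
    assert (HR1 : k * x * y < x - y + k).
    { assert (Hp : 0 < (x - 1)*(1 + y)) by (apply Rmult_lt_0_compat; lra).
      assert (l * ((x - 1)*(1 + y)) = - (l * ((1 - x)*(1 + y)))) by ring.
      assert (Hq : (1 + x)*(y - 1) <= l * ((x - 1)*(1 + y))) by lra.
      pose proof (lt_t_step k l _ _ ltac:(lra) Hl Hp Hq). lra. }
    assert (HT3 : T3 <= k*k*y).
    { assert (k * T2 <= k * (k * y)) by (apply Rmult_le_compat_l; lra). lra. }
    assert (HAx : A * x <= k) by lra.
    assert (HS : k * x * y + 1 > x).
    { assert (0 <= k*(T3*A)) by (apply Rmult_le_pos; [|apply Rmult_le_pos]; lra).
      assert (Hh : k*k*y + A > k) by lra.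
      assert (x * (k*k*y + A) > x * k) by (apply Rmult_gt_compat_l; lra).
      assert (Hk2 : k * (k*x*y + 1) > k * x) by lra.
      apply Rmult_gt_reg_l in Hk2; lra. }
    assert (y < 1 + k) by lra.
    assert (k * y <= k * (1 + k)) by (apply Rmult_le_compat_l; lra).
    assert (k*k <= /9 * /9) by (apply Rmult_le_compat; lra).
    assert (0 < 1 - k*y) by lra.
    assert (x * (1 - k*y) < 1) by lra.
    assert (9 * (1 - k*y) <= x * (1 - k*y)) by (apply Rmult_le_compat_r; lra).
    lra.
Qed.

Lemma div_nonneg a b : 0 <= a -> 0 < b -> 0 <= a / b.
Proof. intros. unfold Rdiv. apply Rmult_le_pos; auto. left; apply Rinv_0_lt_compat; auto. Qed.

Lemma coreB_alg t r C0 S0 C1 S1 C2 S2 C3 S3 Ca Sa :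
  4/5 < t < 1 -> -1 < r < 1 -> 1 + r < t * (1 - r) ->
  0 < C0 -> 0 <= S0 -> 0 < C1 -> 0 <= S1 -> 0 < C2 -> 0 <= S2 -> 0 < C3 -> 0 <= S3 ->
  0 <= Ca -> 0 <= Sa -> Ca*Ca + Sa*Sa = 1 ->
  (1+t) * Sa * S0 <= (1-t) * Ca * C0 ->
  (1+t) * C0 * S1 <= (1-t) * S0 * C1 ->
  (1+t) * C1 * S2 <= (1-t) * S1 * C2 ->
  (1+t) * C2 * S3 <= (1-t) * S2 * C3 ->
  0 <= (1+r)*(C1 + S1)*(C2 - S2) - (1-r)*(C1 - S1)*(C2 + S2) ->
  0 <= (1-r)*(C0 + S0)*(C1 - S1) - (1+r)*(C0 - S0)*(C1 + S1) ->
  0 <= (1+r)*(C3 + S3)*(Ca + Sa) - (1-r)*(C3 - S3)*(Ca - Sa) ->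
  False.
Proof.
  intros Ht Hr Hl HC0 HS0 HC1 HS1 HC2 HS2 HC3 HS3 HCa HSa Hna s0 s1 s2 s3 R2 R1 R4.
  set (k := (1-t)/(1+t)). set (l := (1+r)/(1-r)).
  assert (Hk : 0 < k <= /9).
  { unfold k. split. apply Rdiv_lt_0_compat; lra.
    apply (Rmult_le_reg_r (1+t)). lra. unfold Rdiv. rewrite Rmult_assoc, Rinv_l by lra. lra. }
  assert (Htk : t = (1-k)/(1+k)) by (unfold k; field; lra).
  assert (Hl0 : 0 < l < (1-k)/(1+k)).
  { rewrite <- Htk. unfold l. split. apply Rdiv_lt_0_compat; lra.
    apply (Rmult_lt_reg_r (1-r)). lra. unfold Rdiv. rewrite Rmult_assoc, Rinv_l by lra. lra. }
  set (T0 := S0/C0). set (T1 := S1/C1). set (T2 := S2/C2). set (T3 := S3/C3).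
  assert (E0 : S0 = T0 * C0) by (unfold T0; field; lra).
  assert (E1 : S1 = T1 * C1) by (unfold T1; field; lra).
  assert (E2 : S2 = T2 * C2) by (unfold T2; field; lra).
  assert (E3 : S3 = T3 * C3) by (unfold T3; field; lra).
  assert (P0 : 0 <= T0) by (unfold T0; apply div_nonneg; lra).
  assert (P1 : 0 <= T1) by (unfold T1; apply div_nonneg; lra).
  assert (P2 : 0 <= T2) by (unfold T2; apply div_nonneg; lra).
  assert (P3 : 0 <= T3) by (unfold T3; apply div_nonneg; lra).
  assert (step : forall C S C' S' T T', 0 < C -> 0 < C' -> S = T * C -> S' = T' * C' ->
     (1+t) * C * S' <= (1-t) * S * C' -> T' <= k * T).
  { intros C S C' S' T T' hC hC' eS eS' h. subst S S'.
    assert (h2 : (C * C' * (1+t)) * T' <= (C * C' * (1+t)) * (k * T)).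
    { replace ((C * C' * (1+t)) * (k * T)) with ((1-t) * (T * C) * C') by (unfold k; field; lra).
      lra. }
    apply Rmult_le_reg_l in h2; auto. apply Rmult_lt_0_compat; [apply Rmult_lt_0_compat|]; lra. }
  pose proof (step C0 S0 C1 S1 T0 T1 HC0 HC1 E0 E1 s1) as t1.
  pose proof (step C1 S1 C2 S2 T1 T2 HC1 HC2 E1 E2 s2) as t2.
  pose proof (step C2 S2 C3 S3 T2 T3 HC2 HC3 E2 E3 s3) as t3.
  assert (r2 : (1 - T1)*(1 + T2) <= l * ((1 + T1)*(1 - T2))).
  { rewrite E1, E2 in R2.
    assert (h : (C1 * C2 * (1-r)) * ((1 - T1)*(1 + T2)) <= (C1 * C2 * (1-r)) * (l * ((1 + T1)*(1 - T2)))).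
    { replace ((C1 * C2 * (1-r)) * (l * ((1 + T1)*(1 - T2)))) with
        ((1+r)*(C1 + T1*C1)*(C2 - T2*C2)) by (unfold l; field; lra). lra. }
    apply Rmult_le_reg_l in h; auto. apply Rmult_lt_0_compat; [apply Rmult_lt_0_compat|]; lra. }
  destruct (Rle_lt_dec Ca 0) as [Ca0|Ca0].
  { assert (Ca = 0) by lra. subst Ca.
    assert (Sa = 1) by nra. subst Sa.
    assert (HS00 : S0 = 0) by nra.
    assert (HT0 : T0 = 0) by (unfold T0; rewrite HS00; unfold Rdiv; ring).
    assert (HT1 : T1 = 0).
    { assert (k * T0 = 0) by (rewrite HT0; ring). lra. }
    assert (HT2 : T2 = 0).
    { assert (k * T1 = 0) by (rewrite HT1; ring). lra. }
    rewrite HT1, HT2 in r2. assert (l >= 1) by lra.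
    assert ((1-k)/(1+k) < 1).
    { apply (Rmult_lt_reg_r (1+k)). lra. unfold Rdiv. rewrite Rmult_assoc, Rinv_l by lra. lra. }
    lra. }
  set (A := Sa / Ca).
  assert (EA : Sa = A * Ca) by (unfold A; field; lra).
  assert (PA : 0 <= A) by (unfold A; apply div_nonneg; lra).
  assert (a0 : A * T0 <= k).
  { rewrite EA, E0 in s0.
    assert (h : (Ca * C0 * (1+t)) * (A * T0) <= (Ca * C0 * (1+t)) * k).
    { replace ((Ca * C0 * (1+t)) * k) with ((1-t) * Ca * C0) by (unfold k; field; lra). lra. }
    apply Rmult_le_reg_l in h; auto. apply Rmult_lt_0_compat; [apply Rmult_lt_0_compat|]; lra. }
  assert (r1 : l * ((1 - T0)*(1 + T1)) <= (1 + T0)*(1 - T1)).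
  { rewrite E0, E1 in R1.
    assert (h : (C0 * C1 * (1-r)) * (l * ((1 - T0)*(1 + T1))) <= (C0 * C1 * (1-r)) * ((1 + T0)*(1 - T1))).
    { replace ((C0 * C1 * (1-r)) * (l * ((1 - T0)*(1 + T1)))) with
        ((1+r)*(C0 - T0*C0)*(C1 + T1*C1)) by (unfold l; field; lra). lra. }
    apply Rmult_le_reg_l in h; auto. apply Rmult_lt_0_compat; [apply Rmult_lt_0_compat|]; lra. }
  assert (r4 : (1 - T3)*(1 - A) <= l * ((1 + T3)*(1 + A))).
  { rewrite E3, EA in R4.
    assert (h : (C3 * Ca * (1-r)) * ((1 - T3)*(1 - A)) <= (C3 * Ca * (1-r)) * (l * ((1 + T3)*(1 + A)))).
    { replace ((C3 * Ca * (1-r)) * (l * ((1 + T3)*(1 + A)))) with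
        ((1+r)*(C3 + T3*C3)*(A*Ca + Ca)) by (unfold l; field; lra). lra. }
    apply Rmult_le_reg_l in h; auto. apply Rmult_lt_0_compat; [apply Rmult_lt_0_compat|]; lra. }
  apply (coreB_T k l T0 T1 T2 T3 A); auto.
Qed.

Definition rot (u:(R*R)%type) : (R*R)%type := (- snd u, fst u).
Definition v0 (C S : R) : (R*R)%type := (C - S, C + S).
Definition sc (u:(R*R)%type) : (R*R)%type := (fst u / sqrt 2, snd u / sqrt 2).

Lemma sqrt2_pos : 0 < sqrt 2.
Proof. apply sqrt_lt_R0; lra. Qed.

Lemma e_q c : e (/4 + c) = sc (v0 (cos (PI*c)) (sin (PI*c))).
Proof.
  unfold e, sc, v0; simpl. replace (PI * (/4 + c)) with (PI/4 + PI*c) by field.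
  rewrite cos_plus, sin_plus, cos_PI4, sin_PI4. pose proof sqrt2_pos.
  f_equal; field; lra.
Qed.

Lemma e_half x : e (x + /2) = rot (e x).
Proof.
  unfold e, rot; simpl. replace (PI * (x + /2)) with (PI*x + PI/2) by field.
  rewrite cos_plus, sin_plus, cos_PI2, sin_PI2. f_equal; ring.
Qed.

Lemma rot_sc u : rot (sc u) = sc (rot u).
Proof. unfold rot, sc; simpl. f_equal. field. pose proof sqrt2_pos; lra. Qed.

Lemma e_pt c j : e (/4 + c + INR j * /2) = sc (Nat.iter j rot (v0 (cos (PI*c)) (sin (PI*c)))).
Proof.
  induction j.
  - simpl. rewrite Rmult_0_l, Rplus_0_r. apply e_q.
  - rewrite S_INR. replace (/4 + c + (INR j + 1) * /2) with ((/4 + c + INR j * /2) + /2) by ring.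
    rewrite e_half, IHj, rot_sc. reflexivity.
Qed.

Lemma B_sc X u w : B X (sc u) (sc w) = / 2 * B X u w.
Proof.
  unfold B, sc; simpl. pose proof sqrt2_pos. pose proof (sqrt_sqrt 2 ltac:(lra)).
  set (s := sqrt 2) in *.
  replace (/2) with (/ (s * s)) by (rewrite H0; auto). field. lra.
Qed.

Lemma B_sc_pos X u w : 0 <= B X (sc u) (sc w) -> 0 <= B X u w.
Proof. rewrite B_sc. intros. lra. Qed.

Lemma cos_pos_half c : 0 <= c < /2 -> 0 < cos (PI*c).
Proof. intros. apply cos_gt_0; pose proof PI_RGT_0; nra. Qed.
Lemma sin_nonneg_half c : 0 <= c <= 1 -> 0 <= sin (PI*c).
Proof. intros. apply sin_ge_0; pose proof PI_RGT_0; nra. Qed.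
Lemma cos_nonneg_half c : 0 <= c <= /2 -> 0 <= cos (PI*c).
Proof. intros. apply cos_ge_0; pose proof PI_RGT_0; nra. Qed.

Lemma v0_neg a : v0 (cos (PI*(-a))) (sin (PI*(-a))) = v0 (cos (PI*a)) (- sin (PI*a)).
Proof. replace (PI*(-a)) with (-(PI*a)) by ring. rewrite cos_neg, sin_neg. auto. Qed.

Lemma cs1 c : cos (PI*c) * cos (PI*c) + sin (PI*c) * sin (PI*c) = 1.
Proof. pose proof (sin2_cos2 (PI*c)). unfold Rsqr in H. lra. Qed.

Lemma coreA_pts t r y0 y1 y2 y3 y4 :
  4/5 < t < 1 -> -1 < r < 1 -> 1 + r < t * (1 - r) ->
  /4 - /2 <= y0 < /4 -> /4 <= y1 < /4 + /2 -> /4 + /2 <= y2 < /4 + 1 ->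
  /4 + 1 <= y3 < /4 + 3/2 -> /4 + 3/2 <= y4 <= y0 + 2 ->
  adm t r y0 y1 -> adm t r y1 y2 -> adm t r y2 y3 -> adm t r y3 y4 -> False.
Proof.
  intros Ht Hr Hl H0 H1 H2 H3 H4 [P0 [Q0 R0]] [P1 [Q1 R1]] [P2 [Q2 R2]] [P3 [Q3 R3]].
  set (a0 := /4 - y0). set (c0 := y1 - /4). set (c1 := y2 - /4 - /2).
  set (c2 := y3 - /4 - 1). set (c3 := y4 - /4 - 3/2).
  assert (E0 : e y0 = sc (v0 (cos (PI*a0)) (- sin (PI*a0)))).
  { rewrite <- v0_neg. replace y0 with (/4 + (-a0) + INR 0 * /2) by (simpl; unfold a0; field).
    rewrite e_pt. reflexivity. }
  assert (E1 : e y1 = sc (v0 (cos (PI*c0)) (sin (PI*c0)))).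
  { replace y1 with (/4 + c0 + INR 0 * /2) by (simpl; unfold c0; field). rewrite e_pt. reflexivity. }
  assert (E2 : e y2 = sc (rot (v0 (cos (PI*c1)) (sin (PI*c1))))).
  { replace y2 with (/4 + c1 + INR 1 * /2) by (simpl; unfold c1; field). rewrite e_pt. reflexivity. }
  assert (E3 : e y3 = sc (rot (rot (v0 (cos (PI*c2)) (sin (PI*c2)))))).
  { replace y3 with (/4 + c2 + INR 2 * /2) by (simpl; unfold c2; field). rewrite e_pt. reflexivity. }
  assert (E4 : e y4 = sc (rot (rot (rot (v0 (cos (PI*c3)) (sin (PI*c3))))))).
  { replace y4 with (/4 + c3 + INR 3 * /2) by (simpl; unfold c3; field). rewrite e_pt. reflexivity. }
  rewrite E0, E1 in P0, R0. rewrite E1, E2 in Q1. rewrite E2, E3 in P2. rewrite E3, E4 in R3.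
  apply B_sc_pos in P0, R0, Q1, P2, R3.
  unfold B, Pv, Qv, Rv, rot, v0 in P0, R0, Q1, P2, R3; simpl in P0, R0, Q1, P2, R3.
  apply (coreA_alg t r (cos (PI*c0)) (sin (PI*c0)) (cos (PI*c1)) (sin (PI*c1))
           (cos (PI*c2)) (sin (PI*c2)) (cos (PI*c3)) (sin (PI*c3)) (cos (PI*a0)) (sin (PI*a0))).
  all: try lra.
  all: try (apply cos_pos_half; unfold c0, c1, c2, c3; lra).
  all: try (apply sin_nonneg_half; unfold a0, c0, c1, c2, c3; lra).
  all: try (apply cos_nonneg_half; unfold a0; lra).
  all: try apply cs1.
Qed.

Lemma coreB_pts t r y0 y1 y2 y3 y4 :
  4/5 < t < 1 -> -1 < r < 1 -> 1 + r < t * (1 - r) ->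
  /4 <= y0 < 3/4 -> 3/4 <= y1 < 5/4 -> 5/4 <= y2 < 7/4 ->
  7/4 <= y3 < 9/4 -> 9/4 <= y4 <= y0 + 2 ->
  adm t r y0 y1 -> adm t r y1 y2 -> adm t r y2 y3 -> adm t r y3 y4 -> adm t r y4 (y0 + 2) -> False.
Proof.
  intros Ht Hr Hl H0 H1 H2 H3 H4 [P0 [Q0 R0]] [P1 [Q1 R1]] [P2 [Q2 R2]] [P3 [Q3 R3]] [P4 [Q4 R4]].
  set (a0 := 3/4 - y0). set (c0 := y1 - 3/4). set (c1 := y2 - 5/4).
  set (c2 := y3 - 7/4). set (c3 := y4 - 9/4).
  assert (E0 : e y0 = sc (rot (v0 (cos (PI*a0)) (- sin (PI*a0))))).
  { rewrite <- v0_neg. replace y0 with (/4 + (-a0) + INR 1 * /2) by (simpl; unfold a0; field).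
    rewrite e_pt. reflexivity. }
  assert (E5 : e (y0 + 2) = sc (Nat.iter 5 rot (v0 (cos (PI*a0)) (- sin (PI*a0))))).
  { rewrite <- v0_neg. replace (y0 + 2) with (/4 + (-a0) + INR 5 * /2) by (simpl; unfold a0; field).
    rewrite e_pt. reflexivity. }
  assert (E1 : e y1 = sc (rot (v0 (cos (PI*c0)) (sin (PI*c0))))).
  { replace y1 with (/4 + c0 + INR 1 * /2) by (simpl; unfold c0; field). rewrite e_pt. reflexivity. }
  assert (E2 : e y2 = sc (Nat.iter 2 rot (v0 (cos (PI*c1)) (sin (PI*c1))))).
  { replace y2 with (/4 + c1 + INR 2 * /2) by (simpl; unfold c1; field). rewrite e_pt. reflexivity. }
  assert (E3 : e y3 = sc (Nat.iter 3 rot (v0 (cos (PI*c2)) (sin (PI*c2))))).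
  { replace y3 with (/4 + c2 + INR 3 * /2) by (simpl; unfold c2; field). rewrite e_pt. reflexivity. }
  assert (E4 : e y4 = sc (Nat.iter 4 rot (v0 (cos (PI*c3)) (sin (PI*c3))))).
  { replace y4 with (/4 + c3 + INR 4 * /2) by (simpl; unfold c3; field). rewrite e_pt. reflexivity. }
  rewrite E0, E1 in Q0. rewrite E1, E2 in P1, R1. rewrite E2, E3 in Q2, R2. rewrite E3, E4 in P3.
  rewrite E4, E5 in R4.
  apply B_sc_pos in Q0, P1, R1, Q2, R2, P3, R4.
  unfold B, Pv, Qv, Rv, rot, v0 in Q0, P1, R1, Q2, R2, P3, R4; simpl in Q0, P1, R1, Q2, R2, P3, R4.
  apply (coreB_alg t r (cos (PI*c0)) (sin (PI*c0)) (cos (PI*c1)) (sin (PI*c1))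
           (cos (PI*c2)) (sin (PI*c2)) (cos (PI*c3)) (sin (PI*c3)) (cos (PI*a0)) (sin (PI*a0))).
  all: try lra.
  all: try (apply cos_pos_half; unfold c0, c1, c2, c3; lra).
  all: try (apply sin_nonneg_half; unfold a0, c0, c1, c2, c3; lra).
  all: try (apply cos_nonneg_half; unfold a0; lra).
  all: try apply cs1.
Qed.

Lemma adm_shift1 t r x y : adm t r x y -> adm t r (x + 1) (y + 1).
Proof.
  unfold adm. rewrite !e_shift1. destruct (e x) as [a b], (e y) as [c d].
  unfold B; simpl. intros [H1 [H2 H3]]. repeat split; lra.
Qed.

Lemma adm_shift_m1 t r x y : adm t r x y -> adm t r (x - 1) (y - 1).
Proof.
  intros H. unfold adm in *.
  replace (e x) with (e ((x - 1) + 1)) in H by (f_equal; ring).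
  replace (e y) with (e ((y - 1) + 1)) in H by (f_equal; ring).
  rewrite !e_shift1 in H. destruct (e (x-1)) as [a b], (e (y-1)) as [c d].
  unfold B in *; simpl in *. destruct H as [H1 [H2 H3]]. repeat split; lra.
Qed.

Lemma adm_shift_nat t r x y m : adm t r x y -> adm t r (x + INR m) (y + INR m).
Proof.
  intros H. induction m. simpl. rewrite !Rplus_0_r; auto.
  rewrite S_INR. replace (x + (INR m + 1)) with ((x + INR m) + 1) by ring.
  replace (y + (INR m + 1)) with ((y + INR m) + 1) by ring. apply adm_shift1; auto.
Qed.

Lemma adm_shift_mnat t r x y m : adm t r x y -> adm t r (x - INR m) (y - INR m).
Proof.
  intros H. induction m. simpl. rewrite !Rminus_0_r; auto.
  rewrite S_INR. replace (x - (INR m + 1)) with ((x - INR m) - 1) by ring.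
  replace (y - (INR m + 1)) with ((y - INR m) - 1) by ring. apply adm_shift_m1; auto.
Qed.

Lemma adm_shiftZ t r x y n : adm t r x y -> adm t r (x + IZR n) (y + IZR n).
Proof.
  intros H. destruct n.
  - simpl. rewrite !Rplus_0_r; auto.
  - rewrite <- positive_nat_Z, <- INR_IZR_INZ. apply adm_shift_nat; auto.
  - rewrite <- Pos2Z.opp_pos, opp_IZR, <- positive_nat_Z, <- INR_IZR_INZ.
    set (m := Pos.to_nat p). replace (x + - INR m) with (x - INR m) by ring.
    replace (y + - INR m) with (y - INR m) by ring. apply adm_shift_mnat; auto.
Qed.

Lemma adm_shift2 t r x y : adm t r x y -> adm t r (x + 2) (y + 2).
Proof. intros H. apply (adm_shiftZ t r x y 2 H). Qed.

Definition star (t r y0 y1 y2 y3 y4 : R) : Prop :=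
  y0 <= y1 <= y0 + /2 /\ y1 <= y2 <= y1 + /2 /\ y2 <= y3 <= y2 + /2 /\
  y3 <= y4 <= y3 + /2 /\ y4 <= y0 + 2 <= y4 + /2 /\
  adm t r y0 y1 /\ adm t r y1 y2 /\ adm t r y2 y3 /\ adm t r y3 y4 /\ adm t r y4 (y0 + 2).

Lemma star_rot t r y0 y1 y2 y3 y4 : star t r y0 y1 y2 y3 y4 -> star t r y1 y2 y3 y4 (y0 + 2).
Proof.
  intros [h1 [h2 [h3 [h4 [h5 [a1 [a2 [a3 [a4 a5]]]]]]]]].
  unfold star. split; [lra|split;[lra|split;[lra|split;[lra|split;[lra|]]]]].
  split; [auto|split;[auto|split;[auto|split;[auto|]]]]. apply adm_shift2; auto.
Qed.

Lemma star_shift t r y0 y1 y2 y3 y4 n : star t r y0 y1 y2 y3 y4 ->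
  star t r (y0 + IZR n) (y1 + IZR n) (y2 + IZR n) (y3 + IZR n) (y4 + IZR n).
Proof.
  intros [h1 [h2 [h3 [h4 [h5 [a1 [a2 [a3 [a4 a5]]]]]]]]].
  unfold star. split; [lra|split;[lra|split;[lra|split;[lra|split;[lra|]]]]].
  split; [apply adm_shiftZ; auto|split;[apply adm_shiftZ; auto|split;[apply adm_shiftZ; auto|split;[apply adm_shiftZ; auto|]]]].
  replace (y0 + IZR n + 2) with ((y0 + 2) + IZR n) by ring. apply adm_shiftZ; auto.
Qed.

Lemma core_cfg t r y0 y1 y2 y3 y4 j :
  4/5 < t < 1 -> -1 < r < 1 -> 1 + r < t * (1 - r) ->
  star t r y0 y1 y2 y3 y4 ->
  let b := /4 + IZR j * /2 in
  b - /2 <= y0 < b -> b <= y1 -> b + /2 <= y2 -> b + 1 <= y3 -> b + 3/2 <= y4 -> False.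
Proof.
  intros Ht Hr Hl Hs b Hb0 Hb1 Hb2 Hb3 Hb4.
  destruct (Z.Even_or_Odd j) as [[n Hn]|[n Hn]].
  - pose proof (star_shift t r _ _ _ _ _ (- n) Hs) as Hs'.
    destruct Hs' as [h1 [h2 [h3 [h4 [h5 [a1 [a2 [a3 [a4 a5]]]]]]]]].
    rewrite opp_IZR in *.
    assert (Eb : b + - IZR n = /4) by (unfold b; rewrite Hn, mult_IZR; simpl; field).
    apply (coreA_pts t r (y0 + - IZR n) (y1 + - IZR n) (y2 + - IZR n) (y3 + - IZR n) (y4 + - IZR n));
      auto; lra.
  - pose proof (star_shift t r _ _ _ _ _ (- n) Hs) as Hs'.
    destruct Hs' as [h1 [h2 [h3 [h4 [h5 [a1 [a2 [a3 [a4 a5]]]]]]]]].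
    rewrite opp_IZR in *.
    assert (Eb : b + - IZR n = 3/4) by (unfold b; rewrite Hn, plus_IZR, mult_IZR; simpl; field).
    apply (coreB_pts t r (y0 + - IZR n) (y1 + - IZR n) (y2 + - IZR n) (y3 + - IZR n) (y4 + - IZR n));
      auto; try lra.
Qed.

Lemma no_star t r y0 y1 y2 y3 y4 :
  4/5 < t < 1 -> -1 < r < 1 -> 1 + r < t * (1 - r) ->
  star t r y0 y1 y2 y3 y4 -> False.
Proof.
  intros Ht Hr Hl Hs.
  destruct (archimed (2*y0 - /2)) as [A1 A2].
  set (j := up (2*y0 - /2)) in *.
  set (b := /4 + IZR j * /2).
  assert (Hb : b - /2 <= y0 < b) by (unfold b; lra).
  assert (Eb : b = /4 + IZR j * /2) by reflexivity. clearbody b.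
  pose proof Hs as [h1 [h2 [h3 [h4 [h5 _]]]]].
  destruct (Rlt_le_dec y1 b).
  {
    apply (core_cfg t r y1 y2 y3 y4 (y0 + 2) j Ht Hr Hl (star_rot _ _ _ _ _ _ _ Hs));
      lra. }
  destruct (Rlt_le_dec y2 (b + /2)).
  { pose proof (star_rot _ _ _ _ _ _ _ (star_rot _ _ _ _ _ _ _ Hs)) as Hs2.
    apply (core_cfg t r y2 y3 y4 (y0 + 2) (y1 + 2) (j + 1) Ht Hr Hl Hs2);
      rewrite plus_IZR; simpl; lra. }
  destruct (Rlt_le_dec y3 (b + 1)).
  { pose proof (star_rot _ _ _ _ _ _ _ (star_rot _ _ _ _ _ _ _ (star_rot _ _ _ _ _ _ _ Hs))) as Hs3.
    apply (core_cfg t r y3 y4 (y0 + 2) (y1 + 2) (y2 + 2) (j + 2) Ht Hr Hl Hs3);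
      rewrite plus_IZR; simpl; lra. }
  destruct (Rlt_le_dec y4 (b + 3/2)).
  { pose proof (star_rot _ _ _ _ _ _ _ (star_rot _ _ _ _ _ _ _ (star_rot _ _ _ _ _ _ _
                 (star_rot _ _ _ _ _ _ _ Hs)))) as Hs4.
    apply (core_cfg t r y4 (y0 + 2) (y1 + 2) (y2 + 2) (y3 + 2) (j + 3) Ht Hr Hl Hs4);
      rewrite plus_IZR; simpl; lra. }
  apply (core_cfg t r y0 y1 y2 y3 y4 j Ht Hr Hl Hs); lra.
Qed.

Lemma adm_len t r x y : adm t r x y -> 0 <= y - x < 1 -> y - x <= /2.
Proof.
  intros [H1 [H2 _]] Hxy.
  assert (E : B (Pv t) (e x) (e y) + B (Qv t) (e x) (e y) = 2 * cos (PI*y - PI*x)).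
  { rewrite cos_minus. unfold B, Pv, Qv, e; simpl. ring. }
  destruct (Rle_lt_dec (y - x) (/2)); auto.
  assert (cos (PI*y - PI*x) < 0).
  { apply cos_lt_0; pose proof PI_RGT_0; nra. }
  lra.
Qed.

Lemma core_G t r : 4/5 < t < 1 -> -1 < r < 1 -> 1 + r < t * (1 - r) ->
  forall y, It (G t r) 5 y < y + 2.
Proof.
  intros Ht Hr Hl y.
  assert (Hp : prm t r) by (split; lra).
  destruct (Rlt_le_dec (It (G t r) 5 y) (y + 2)) as [|Hge]; auto. exfalso.
  set (x1 := G t r y). set (x2 := G t r x1). set (x3 := G t r x2).
  set (x4 := G t r x3).
  assert (E5 : It (G t r) 5 y = G t r x4) by reflexivity.
  assert (step : forall z, adm t r z (G t r z) /\ z <= G t r z <= z + /2).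
  { intro z. pose proof (G_adm t r z Hp). pose proof (G_range t r z).
    pose proof (adm_len t r z (G t r z) H ltac:(lra)). split; auto; lra. }
  destruct (step y) as [a1 b1]. destruct (step x1) as [a2 b2].
  destruct (step x2) as [a3 b3]. destruct (step x3) as [a4 b4]. destruct (step x4) as [a5 b5].
  fold x1 in a1, b1. fold x2 in a2, b2. fold x3 in a3, b3. fold x4 in a4, b4.
  rewrite E5 in Hge.
  apply (no_star t r y x1 x2 x3 x4 Ht Hr Hl).
  unfold star. split; [lra|split;[lra|split;[lra|split;[lra|split;[lra|]]]]].
  split; [auto|split;[auto|split;[auto|split;[auto|]]]].
  apply adm_right with (G t r x4); auto. lra. pose proof (G_range t r x4). lra.
Qed.

Lemma iter_ext (f g : R -> R) (H : forall z, f z = g z) n x : Nat.iter n f x = Nat.iter n g x.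
Proof. induction n. reflexivity. simpl. rewrite IHn, H. reflexivity. Qed.

Theorem lemma6p16 (t r' : R) :
  8/10 < t < 1 -> -1 < r' < (t - 1) / (t + 1) ->
  let U := filled_triangle (pair 0 t) (pair 0 (- t)) (pair r' 0) in
  (exists F, is_psi_lift U F) /\
  (forall F, is_psi_lift U F -> forall x : R,
     exists rho, Un_cv (fun n => (Nat.iter n F x - x) / INR n) rho /\ rho < 2/5).
Proof.
  intros Ht Hr U.
  assert (H1 : r' * (t + 1) < t - 1).
  { assert (r' * (t+1) < (t - 1) / (t + 1) * (t + 1)) by (apply Rmult_lt_compat_r; lra).
    replace ((t - 1) / (t + 1) * (t + 1)) with (t - 1) in H by (field; lra). auto. }
  assert (Ht' : 4/5 < t < 1) by lra.
  assert (Hr' : -1 < r' < 1) by nra.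
  assert (Hl : 1 + r' < t * (1 - r')) by nra.
  assert (Hp : prm t r') by (split; lra).
  split.
  - exists (G t r'). apply G_lift; auto.
  - intros F HF x.
    pose proof (F_eq_G t r' F Hp HF) as HFG.
    destruct (rot_bound (G t r') (G_per t r') (fun a b H => G_mono t r' a b Hp H)
                (G_cont t r' Hp) (core_G t r' Ht' Hr' Hl) x) as [rho [Hcv Hlt]].
    exists rho. split; auto.
    intros eps Heps. destruct (Hcv eps Heps) as [N HN]. exists N. intros n Hn.
    rewrite (iter_ext F (G t r') HFG). apply HN; auto.
Qed.
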